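(* Let $H$ be a reasonable Hintikka tree with induced measure $\beta$, and for a sentence $\varphi$ of depth $d$ let $\boldsymbol{\varphi} = \sum_{\delta^{(d)} \in \mathrm{dnf}(\varphi)} \chi_{[\delta^{(0)}\cdots\delta^{(d)}]} \in L^2(\Psi^\omega, \beta)$. Then for all sentences $\varphi, \varphi_1, \varphi_2$: (1) $\langle \boldsymbol{\varphi}, \boldsymbol{\lnot\varphi} \rangle = 0$; (2) $\boldsymbol{\varphi_1 \lor \varphi_2} = \boldsymbol{\varphi_1} \oplus \boldsymbol{\varphi_2}$, where $(f \oplus g)(x) = \max(f(x), g(x))$; (3) if $\langle \boldsymbol{\varphi_1}, \boldsymbol{\varphi_2} \rangle = 0$ then $\varphi_1 \models \lnot \varphi_2$.
   Context: $L$ is a first-order language without equality with finitely many predicate symbols and no function or constant symbols. For $d \in \mathbb{N}$, $\Delta^{(d)}$ is the finite set of Hintikka constituents of depth $d$ with no free variables ($\Delta^{(0)} = \{\top\}$); distinct constituents of the same depth are mutually exclusive, every sentence $\varphi$ of quantifier depth $d$ is logically equivalent to the disjunction of a set $\mathrm{dnf}(\varphi) \subseteq \Delta^{(d)}$ (its Hintikka distributive normal form), and $\mathrm{expand}(e,\delta^{(d)})\subseteq\Delta^{(d+e)}$ denotes the expansions of $\delta^{(d)}$, whose disjunction is equivalent to $\delta^{(d)}$. A fixed decidable criterion of trivial inconsistency for constituents is given; trivially inconsistent constituents are inconsistent (unsatisfiable). Refinement tree: on $\Delta = \bigcup_d \Delta^{(d)}$ put an edge from each $\delta^{(d)}$ to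 each member of $\mathrm{expand}(1,\delta^{(d)})$, keeping a constituent lying in several depth-$d$ expansions as child of only one of them. A Hintikka tree is a function $H: \Delta \to [0,1]$ with $H(\delta^{(0)}) = 1$ and $H(\delta) = \sum_{\delta' \text{ child of } \delta} H(\delta')$; it is reasonable if $H(\delta) > 0$ for every constituent $\delta$ that is not trivially inconsistent. $\Psi^\omega$ is the set of infinite root paths in the refinement tree with the topology generated by cylinders $[\delta^{(0)}\cdots\delta^{(d)}]$ (paths with that prefix; here $\delta^{(0)}\cdots\delta^{(d)}$ is the root path to $\delta^{(d)}$), $\beta$ is the unique Borel probability measure with $\beta([\delta^{(0)}\cdots\delta^{(d)}]) = H(\delta^{(d)})$, $\chi_X$ is the indicator of $X$, and $L^2(\Psi^\omega,\beta)$ has inner product $\langle f, g\rangle = \int f g\, d\beta$. *)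

(* Defs.v *)
From HB Require Import structures.
From mathcomp Require Import all_boot all_order all_algebra.
From mathcomp Require Import all_classical all_reals all_analysis.
Set Implicit Arguments. Unset Strict Implicit. Unset Printing Implicit Defensive.
Import Order.TTheory GRing.Theory Num.Theory.
Local Open Scope ring_scope.

(* A first-order language L without equality, with np predicate symbols       *)
(* P_0 .. P_(np-1) of arities ar p, and no function or constant symbols.      *)
Section FOL.
Variables (np : nat) (ar : 'I_np -> nat).

Inductive foform : Type :=
  | FAtom (p : 'I_np) of (ar p).-tuple nat
  | FNot of foform
  | FAnd of foform & foform
  | FOr of foform & foform
  | FImp of foform & foform
  | FEx of nat & foform
  | FAll of nat & foform.

Fixpoint qdepth (f : foform) : nat :=
  match f with
  | FAtom _ _ => 0
  | FNot g => qdepth g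
  | FAnd g h | FOr g h | FImp g h => maxn (qdepth g) (qdepth h)
  | FEx _ g | FAll _ g => (qdepth g).+1
  end.

Fixpoint fv (f : foform) : seq nat :=
  match f with
  | FAtom _ t => tval t
  | FNot g => fv g
  | FAnd g h | FOr g h | FImp g h => fv g ++ fv h
  | FEx x g | FAll x g => [seq y <- fv g | y != x]
  end.

Definition sentence (f : foform) : Prop := fv f = [::].

(* Tarskian semantics: a structure is a type D with interpretations I of the
   predicate symbols; assignments a : nat -> D (so D is nonempty). *)
Definition upd (D : Type) (a : nat -> D) (x : nat) (e : D) : nat -> D :=
  fun y => if y == x then e else a y.

Fixpoint sat (D : Type) (I : forall p : 'I_np, (ar p).-tuple D -> Prop)
    (a : nat -> D) (f : foform) : Prop :=
  match f with
  | FAtom p t => I p (map_tuple a t)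
  | FNot g => ~ sat I a g
  | FAnd g h => sat I a g /\ sat I a h
  | FOr g h => sat I a g \/ sat I a h
  | FImp g h => sat I a g -> sat I a h
  | FEx x g => exists e : D, sat I (upd a x e) g
  | FAll x g => forall e : D, sat I (upd a x e) g
  end.

Definition entails (f g : foform) : Prop :=
  forall (D : Type) (I : forall p : 'I_np, (ar p).-tuple D -> Prop)
    (a : nat -> D), sat I a f -> sat I a g.

(* Hintikka constituents.  Con d k = constituents of depth d in the free      *)
(* variables x_0 .. x_(k-1):                                                   *)
(*  - depth 0: a choice of sign for every atomic formula in x_0..x_(k-1);     *)
(*  - depth d+1: such a sign choice A together with a set S of depth-d        *)
(*    constituents in x_0..x_k, standing for                                  *)
(*      A /\ (/\_(g in S) exists x_k, g) /\ forall x_k, \/_(g in S) g.        *)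
Definition Atm (k : nat) : finType := {p : 'I_np & (ar p).-tuple 'I_k}.

Fixpoint Con (d k : nat) : finType :=
  match d with
  | 0 => {ffun Atm k -> bool}
  | d'.+1 => ({ffun Atm k -> bool} * {set Con d' k.+1})%type
  end.

Definition atomsOf (d k : nat) : Con d k -> {ffun Atm k -> bool} :=
  match d return Con d k -> {ffun Atm k -> bool} with
  | 0 => fun x => x
  | _.+1 => fun x => x.1
  end.

(* Delta^(d) = Con d 0 (constituents without free variables). *)

Definition atoms_hold (D : Type) (I : forall p : 'I_np, (ar p).-tuple D -> Prop)
    (a : nat -> D) (k : nat) (v : {ffun Atm k -> bool}) : Prop :=
  forall t : Atm k,
    v t <-> I (tag t) (map_tuple (fun i : 'I_k => a (nat_of_ord i)) (tagged t)).

Fixpoint satC (D : Type) (I : forall p : 'I_np, (ar p).-tuple D -> Prop)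
    (d k : nat) : (nat -> D) -> Con d k -> Prop :=
  match d return (nat -> D) -> Con d k -> Prop with
  | 0 => fun a x => atoms_hold I a x
  | d'.+1 => fun a x =>
      [/\ atoms_hold I a x.1,
          (forall g, g \in x.2 -> exists e : D, @satC D I d' k.+1 (upd a k e) g) &
          (forall e : D, exists2 g, g \in x.2 & @satC D I d' k.+1 (upd a k e) g)]
  end.

Fixpoint reduct (d k : nat) : Con d.+1 k -> Con d k :=
  match d return Con d.+1 k -> Con d k with
  | 0 => fun x => x.1
  | d'.+1 => fun x => (x.1, [set @reduct d' k.+1 g | g in x.2])
  end.

(* expand(1, delta): the depth-(d+1) constituents subordinate to delta;
   these are the children of delta in the refinement tree (each depth-(d+1)
   constituent has the unique parent given by reduct). *)
Definition expand1 (d : nat) (x : Con d 0) : {set Con d.+1 0} :=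
  [set y | reduct y == x].

(* Syntactic evaluation of a formula in a constituent; the variable map s     *)
(* sends formula variables to the positions of the constituent.               *)
Definition oseq (T : Type) (s : seq (option T)) : option (seq T) :=
  foldr (fun o acc => match o, acc with
                      | Some x, Some l => Some (x :: l)
                      | _, _ => None end) (Some [::]) s.

Definition lookA (k : nat) (v : {ffun Atm k -> bool}) (p : 'I_np)
    (t : (ar p).-tuple nat) (s : nat -> option 'I_k) : bool :=
  match oseq [seq s i | i <- tval t] with
  | Some l =>
      match (insub l : option ((ar p).-tuple 'I_k)) with
      | Some u => v (@Tagged 'I_np p (fun q => (ar q).-tuple 'I_k) u)
      | None => false
      end
  | None => false
  end.

Definition extv (k : nat) (s : nat -> option 'I_k) (x : nat) : nat -> option 'I_k.+1 :=
  fun y => if y == x then Some ord_max else omap (widen_ord (leqnSn k)) (s y).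

Fixpoint eval (f : foform) (d k : nat) {struct f} : Con d k -> (nat -> option 'I_k) -> bool :=
  match f with
  | FAtom p t => fun x s => lookA (atomsOf x) t s
  | FNot g => fun x s => ~~ eval g x s
  | FAnd g h => fun x s => eval g x s && eval h x s
  | FOr g h => fun x s => eval g x s || eval h x s
  | FImp g h => fun x s => eval g x s ==> eval h x s
  | FEx y g =>
      match d return Con d k -> (nat -> option 'I_k) -> bool with
      | 0 => fun _ _ => false
      | d'.+1 => fun x s => [exists c in x.2, @eval g d' k.+1 c (extv s y)]
      end
  | FAll y g =>
      match d return Con d k -> (nat -> option 'I_k) -> bool with
      | 0 => fun _ _ => false
      | d'.+1 => fun x s => [forall c in x.2, @eval g d' k.+1 c (extv s y)]
      end
  end.

Definition dnf (f : foform) : {set Con (qdepth f) 0} :=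
  [set x | eval f x (fun _ => None)].

(* The space Psi^omega of infinite root paths of the refinement tree.         *)
Fixpoint clift (d k : nat) : Con d k -> Con d.+1 k :=
  match d return Con d k -> Con d.+1 k with
  | 0 => fun x => (x, finset.set0)
  | d'.+1 => fun x => (x.1, [set @clift d' k.+1 g | g in x.2])
  end.

Lemma reduct_clift d k (x : Con d k) : reduct (clift x) = x.
Proof.
elim: d k x => [|d IH] k x //=.
case: x => a S /=; congr (_, _).
rewrite -imset_comp -[RHS]imset_id; apply: eq_imset => g /=; exact: IH.
Qed.

Fixpoint cpoint (d : nat) : Con d 0 :=
  match d with
  | 0 => [ffun => false]
  | d'.+1 => clift (cpoint d')
  end.

Lemma cpoint_path d : reduct (cpoint d.+1) = cpoint d.
Proof. exact: reduct_clift. Qed.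

Definition path : Type :=
  {x : forall d, Con d 0 | forall d, reduct (x d.+1) = x d}.

HB.instance Definition _ := gen_eqMixin path.
HB.instance Definition _ := gen_choiceMixin path.
HB.instance Definition _ := isPointed.Build path (exist _ cpoint cpoint_path).

Definition cyl (d : nat) (x : Con d 0) : set path :=
  [set w | proj1_sig w d = x].

Definition cylinders : set (set path) :=
  [set A | exists d (x : Con d 0), A = cyl x].

(* Psi^omega with the sigma-algebra generated by the cylinders, which is the
   Borel sigma-algebra of the topology generated by the (countably many,
   clopen) cylinders. *)
Definition Psi : measurableType _ := g_sigma_algebraType cylinders.

Definition hintikka_tree (R : realType) (H : forall d, Con d 0 -> R) : Prop :=
  [/\ (forall x : Con 0 0, H 0 x = 1),
      (forall d (x : Con d 0), 0 <= H d x <= 1) &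
      (forall d (x : Con d 0), H d x = \sum_(y in expand1 x) H d.+1 y)].

Definition reasonable (R : realType) (triv : forall d, Con d 0 -> bool)
    (H : forall d, Con d 0 -> R) : Prop :=
  forall d (x : Con d 0), ~~ triv d x -> 0 < H d x.

(* the element bold-phi of L^2(Psi^omega, beta) (a representative) *)
Definition boldf (R : realType) (f : foform) : Psi -> R :=
  fun w => \sum_(x in dnf f) \1_(cyl x) w.

End FOL.

(* Main.v *)
Require Import Defs.
From HB Require Import structures.
From mathcomp Require Import all_boot all_order all_algebra.
From mathcomp Require Import all_classical all_reals all_analysis.
Import Order.TTheory GRing.Theory Num.Theory.
Local Open Scope ring_scope.

Section Sem.
Variables (np : nat) (ar : 'I_np -> nat).

Lemma eval_reduct (f : foform ar) : forall d k (x : Con ar d.+1 k) s,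
  (qdepth f <= d)%N -> Defs.eval f (reduct x) s = Defs.eval f x s.
Proof.
elim: f => [p t|g IH|g IHg h IHh|g IHg h IHh|g IHg h IHh|y g IH|y g IH] d k x s /=.
- by case: d x => [|d] x.
- by move=> hd; rewrite IH.
- by rewrite geq_max => /andP[h1 h2]; rewrite IHg // IHh.
- by rewrite geq_max => /andP[h1 h2]; rewrite IHg // IHh.
- by rewrite geq_max => /andP[h1 h2]; rewrite IHg // IHh.
- case: d x => [|d] x //= hd.
  apply/existsP/existsP => [[c /andP[/imsetP[c' c'in ->] ev]]|[c /andP[cin ev]]].
    by exists c'; rewrite c'in /= -IH.
  by exists (reduct c); rewrite imset_f //= IH.
- case: d x => [|d] x //= hd.
  apply/forallP/forallP => [H c|H c]; apply/implyP => cin.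
    by rewrite -IH //; move: (H (reduct c)) => /implyP; apply; rewrite imset_f.
  move/imsetP: cin => [c' c'in ->]; rewrite IH //.
  by move: (H c') => /implyP; apply.
Qed.
End Sem.
Section Sem2.
Variables (np : nat) (ar : 'I_np -> nat).
Variables (D : Type) (I : forall p : 'I_np, (ar p).-tuple D -> Prop).

Definition atomv k (a : nat -> D) : {ffun Atm ar k -> bool} :=
  [ffun t => `[< I (tag t) (map_tuple (fun i : 'I_k => a (nat_of_ord i)) (tagged t)) >]].

Fixpoint char d k (a : nat -> D) : Con ar d k :=
  match d return Con ar d k with
  | 0 => atomv k a
  | d'.+1 => (atomv k a, [set c | `[< exists e, c = char d' k.+1 (upd a k e) >]])
  end.

Lemma atoms_char d k a : atomsOf (char d k a) = atomv k a.
Proof. by case: d. Qed.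

Lemma atoms_hold_atomv k a : atoms_hold I a (atomv k a).
Proof. by move=> t; rewrite ffunE; split => /asboolP. Qed.

Lemma satC_char d : forall k a, satC I a (char d k a).
Proof.
elim: d => [|d IH] k a /=; first exact: atoms_hold_atomv.
split; first exact: atoms_hold_atomv.
- by move=> g; rewrite inE => /asboolP[e ->]; exists e.
- move=> e; exists (char d k.+1 (upd a k e)) => //.
  by rewrite inE; apply/asboolP; exists e.
Qed.

Lemma oseq_map k (s : nat -> option 'I_k) (a : nat -> D) (b : nat -> D) (t : seq nat) :
  (forall y, y \in t -> exists i : 'I_k, s y = Some i /\ b y = a (nat_of_ord i)) ->
  exists l : seq 'I_k, oseq [seq s i | i <- t] = Some l /\
     [seq a (nat_of_ord i) | i <- l] = [seq b y | y <- t].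
Proof.
elim: t => [|y t IH] H; first by exists [::].
have [i [si bi]] := H y (mem_head _ _).
have [|l [hl ml]] := IH; first by move=> z zt; apply: H; rewrite in_cons zt orbT.
by exists (i :: l); rewrite /= si hl /= ml bi.
Qed.

Arguments oseq_map {k s a b t}.
Lemma eval_char (f : foform ar) : forall d k (a : nat -> D) (s : nat -> option (ordinal k)) (b : nat -> D), (qdepth f <= d)%N ->
  (forall y, y \in fv f -> exists i : 'I_k, s y = Some i /\ b y = a (nat_of_ord i)) ->
  Defs.eval f (char d k a) s <-> sat I b f.
Proof.
elim: f => [p t|g IH|g IHg h IHh|g IHg h IHh|g IHg h IHh|y g IH|y g IH] d k a s b /=.
- move=> _ hfv; rewrite atoms_char /lookA.
  have [l [-> ml]] := oseq_map hfv.
  have sz : size l == ar p by rewrite -(size_map (fun i : 'I_k => a i)) ml size_map size_tuple.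
  rewrite insubT /= ffunE /=.
  have -> : map_tuple (fun i : 'I_k => a i) (Tuple sz) = map_tuple b t by apply: val_inj.
  by split => /asboolP.
- move=> hd hfv; have := IH d k a s b hd hfv.
  move=> [h1 h2]; split => [/negP ne hs|hn]; first by apply: ne; apply: h2.
  by apply/negP => /h1.
- rewrite geq_max => /andP[h1 h2] hfv.
  have := IHg d k a s b h1 (fun y hy => hfv y ltac:(by rewrite mem_cat hy)).
  have := IHh d k a s b h2 (fun y hy => hfv y ltac:(by rewrite mem_cat hy orbT)).
  move=> [A1 A2] [B1 B2]; split; first by case/andP => /B1 ? /A1.
  by case=> /B2 -> /A2 ->.
- rewrite geq_max => /andP[h1 h2] hfv.
  have := IHg d k a s b h1 (fun y hy => hfv y ltac:(by rewrite mem_cat hy)).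
  have := IHh d k a s b h2 (fun y hy => hfv y ltac:(by rewrite mem_cat hy orbT)).
  move=> [A1 A2] [B1 B2]; split; first by case/orP => [/B1|/A1]; auto.
  by case=> [/B2|/A2] ->; rewrite ?orbT.
- rewrite geq_max => /andP[h1 h2] hfv.
  have := IHg d k a s b h1 (fun y hy => hfv y ltac:(by rewrite mem_cat hy)).
  have := IHh d k a s b h2 (fun y hy => hfv y ltac:(by rewrite mem_cat hy orbT)).
  move=> [A1 A2] [B1 B2]; split; first by move/implyP => hi /B2 /hi /A1.
  move=> hi; apply/implyP => /B1 /hi /A2 //.
- case: d => [|d] //= hd hfv.
  have key : forall e, Defs.eval g (char d k.+1 (upd a k e)) (extv s y) <-> sat I (upd b y e) g.
    move=> e; apply: IH => // z zg; rewrite /extv /upd.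
    case: (z =P y) => [zy|/eqP zy]; first by subst z; exists ord_max; rewrite /= eqxx.
    have [|i [-> bi]] := hfv z; first by rewrite mem_filter zy.
    exists (widen_ord (leqnSn k) i); split => //=.
    by rewrite bi (ltn_eqF (ltn_ord i)).
  split.
    move/existsP=> [c /andP[]]; rewrite inE => /asboolP[e ->] /key ?; by exists e.
  move=> [e /key he]; apply/existsP; exists (char d k.+1 (upd a k e)).
  by rewrite he andbT inE; apply/asboolP; exists e.
- case: d => [|d] //= hd hfv.
  have key : forall e, Defs.eval g (char d k.+1 (upd a k e)) (extv s y) <-> sat I (upd b y e) g.
    move=> e; apply: IH => // z zg; rewrite /extv /upd.
    case: (z =P y) => [zy|/eqP zy]; first by subst z; exists ord_max; rewrite /= eqxx.
    have [|i [-> bi]] := hfv z; first by rewrite mem_filter zy.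
    exists (widen_ord (leqnSn k) i); split => //=.
    by rewrite bi (ltn_eqF (ltn_ord i)).
  split.
    move/forallP=> hc e; apply/key; move: (hc (char d k.+1 (upd a k e))) => /implyP; apply.
    by rewrite inE; apply/asboolP; exists e.
  move=> he; apply/forallP => c; apply/implyP; rewrite inE => /asboolP[e ->].
  exact/key.
Qed.
End Sem2.

Section Meas.
Variables (np : nat) (ar : 'I_np -> nat) (R : realType).

Lemma proj_eval (f : foform ar) (w : Defs.path ar) d1 d s :
  (d1 <= d)%N -> (qdepth f <= d1)%N ->
  Defs.eval f (proj1_sig w d1) s = Defs.eval f (proj1_sig w d) s.
Proof.
move=> hd hf; elim: d hd => [|d IH]; first by rewrite leqn0 => /eqP ->.
rewrite leq_eqVlt => /orP[/eqP -> //|]; rewrite ltnS => hd'; rewrite IH //.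
rewrite -(proj2_sig w d) eval_reduct //; exact: leq_trans hf hd'.
Qed.

Lemma boldfE (f : foform ar) (w : Psi ar) :
  boldf R f w = (Defs.eval f (proj1_sig w (qdepth f)) (fun _ => None))%:R.
Proof.
rewrite /boldf; set y := proj1_sig w (qdepth f).
have E : forall x, \1_(cyl x) w = (x == y)%:R :> R.
  move=> x; rewrite /indic; have -> : (w \in cyl x) = (x == y) by apply/idP/eqP => [/set_mem <- //|->]; apply: mem_set.
  by [].
under eq_bigr do rewrite E.
case: (boolP (y \in dnf f)) => yA.
  rewrite (bigD1 y) //= eqxx big1 ?addr0; last by move=> x /andP[_ /negbTE ->].
  by move: yA; rewrite inE => ->.
rewrite big1; last by move=> x xA; case: eqP => // xy; subst; rewrite xA in yA.
by move: yA; rewrite inE => /negbTE ->.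
Qed.

Lemma meas_cyl d (x : Con ar d 0) : measurable (cyl x : set (Psi ar)).
Proof. by apply: sub_sigma_algebra; exists d, x. Qed.

Lemma meas_boldf (f : foform ar) : measurable_fun setT (boldf R f : Psi ar -> R).
Proof.
have -> : boldf R f = fun w => \sum_(x <- index_enum (Con ar (qdepth f) 0))
    (if x \in dnf f then \1_(cyl x) w else 0).
  by apply/funext => w; rewrite /boldf big_mkcond.
apply: measurable_sum => x /=; case: (x \in dnf f); last exact: measurable_cst.
apply: measurable_realfun.measurable_indic; exact: meas_cyl.
Qed.
End Meas.
Theorem mainTheorem9
  (np : nat) (ar : 'I_np -> nat) (ar_pos : forall p, (0 < ar p)%N)
  (triv : forall d, Con ar d 0 -> bool)
  (triv_sound : forall d (x : Con ar d 0), triv d x ->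
     forall (D : Type) (I : forall p : 'I_np, (ar p).-tuple D -> Prop)
       (a : nat -> D), ~ satC I a x)
  (R : realType) (H : forall d, Con ar d 0 -> R)
  (hH : hintikka_tree H) (hreas : reasonable triv H)
  (beta : probability (Psi ar) R)
  (hbeta : forall d (x : Con ar d 0), beta (cyl x) = (H d x)%:E)
  (phi phi1 phi2 : foform ar)
  (sphi : sentence phi) (sphi1 : sentence phi1) (sphi2 : sentence phi2) :
  [/\ (\int[beta]_w ((boldf R phi w * boldf R (FNot phi) w)%:E) = 0)%E,
      {ae beta, forall w,
         boldf R (FOr phi1 phi2) w = Num.max (boldf R phi1 w) (boldf R phi2 w)} &
      ((\int[beta]_w ((boldf R phi1 w * boldf R phi2 w)%:E) = 0)%E ->
         entails phi1 (FNot phi2))].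
Proof.
set d := maxn (qdepth phi1) (qdepth phi2).
have E1 : forall w : Psi ar, boldf R phi1 w =
    (Defs.eval phi1 (proj1_sig w d) (fun _ => None))%:R.
  by move=> w; rewrite boldfE (@proj_eval _ _ phi1 w _ d _ (leq_maxl _ _) (leqnn _)).
have E2 : forall w : Psi ar, boldf R phi2 w =
    (Defs.eval phi2 (proj1_sig w d) (fun _ => None))%:R.
  by move=> w; rewrite boldfE (@proj_eval _ _ phi2 w _ d _ (leq_maxr _ _) (leqnn _)).
split.
- apply: integral0_eq => w _; rewrite !boldfE /=.
  by case: (Defs.eval phi _ _); rewrite ?mulr0 ?mul0r.
- apply: aeW => w; rewrite boldfE E1 E2 /=.
  by case: (Defs.eval phi1 _ _); case: (Defs.eval phi2 _ _);
     rewrite /Order.max ?ltr01 ?ltxx ?ltr10.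
- move=> hint D I a s1 s2.
  set x0 := @char _ ar D I d 0 a.
  have ntriv : ~~ triv d x0.
    by apply/negP => /triv_sound /(_ D I a); apply; apply: satC_char.
  have Hpos := hreas d x0 ntriv.
  have ev1 : Defs.eval phi1 x0 (fun _ => None).
    apply/(@eval_char _ ar D I phi1 d 0 a (fun _ => None) a); first exact: leq_maxl.
      by move=> y; rewrite sphi1.
    exact: s1.
  have ev2 : Defs.eval phi2 x0 (fun _ => None).
    apply/(@eval_char _ ar D I phi2 d 0 a (fun _ => None) a); first exact: leq_maxr.
      by move=> y; rewrite sphi2.
    exact: s2.
  have : (beta (cyl x0) <= \int[beta]_w ((boldf R phi1 w * boldf R phi2 w)%:E))%E.
    have -> : beta (cyl x0) = (\int[beta]_w (\1_(cyl x0) w)%:E)%E.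
      by rewrite integral_indic ?setIT //; exact: meas_cyl.
    apply: ge0_le_integral => //.
    + by apply/measurable_realfun.measurable_EFinP; apply: measurable_realfun.measurable_indic; exact: meas_cyl.
    + by apply/measurable_realfun.measurable_EFinP; apply: measurable_realfun.measurable_funM; apply: meas_boldf.
    + move=> w _; rewrite lee_fin E1 E2 /indic.
      case: (boolP (w \in cyl x0)) => [/set_mem /= ->|_].
        by rewrite ev1 ev2 mulr1.
      by rewrite /= mulr_ge0.
  by rewrite hint hbeta lee_fin leNgt Hpos.
Qed.
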